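(* $\mathfrak{mc}(\mathsf{meager},\subseteq)=\operatorname{non}(\mathsf{meager})$ and $\mathfrak{mac}(\mathsf{meager}\setminus\{\emptyset\},\subseteq)=\mathfrak{c}$.
   Context: $\mathsf{meager}$ is the ideal of meager subsets of $2^\omega$, ordered by inclusion. For a poset $P$, a chain (antichain) is a set of pairwise comparable (pairwise incomparable) elements; $\mathfrak{mc}(P)$ and $\mathfrak{mac}(P)$ are the minimal cardinalities of a maximal (under inclusion) chain and of a maximal antichain, respectively. $\operatorname{non}(\mathsf{meager})$ is the minimal size of a non-meager subset of $2^\omega$. $\mathfrak{c}=2^{\aleph_0}$. *)

(* Defs.v *)
From HB Require Import structures.
From mathcomp Require Import all_boot all_order all_algebra.
From mathcomp Require Import all_classical all_reals all_analysis.
Set Implicit Arguments. Unset Strict Implicit. Unset Printing Implicit Defensive.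
Local Open Scope classical_set_scope.

Notation C2 := cantor_space.

Definition nowhere_dense_set (T : topologicalType) (A : set T) : Prop :=
  interior (closure A) = set0.

Definition meager_set (T : topologicalType) (A : set T) : Prop :=
  exists F : nat -> set T, (forall n, nowhere_dense_set (F n)) /\
    A `<=` \bigcup_n F n.

Definition meager_ideal : set (set C2) := [set A | meager_set A].

Definition meager_ideal_nonempty : set (set C2) := meager_ideal `\` [set set0].

Definition is_chain (T : Type) (P C : set (set T)) : Prop :=
  C `<=` P /\ forall X Y, C X -> C Y -> X `<=` Y \/ Y `<=` X.

Definition is_antichain (T : Type) (P A : set (set T)) : Prop :=
  A `<=` P /\ forall X Y, A X -> A Y -> X <> Y -> ~ (X `<=` Y) /\ ~ (Y `<=` X).

Definition maximal_chain (T : Type) (P C : set (set T)) : Prop :=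
  is_chain P C /\ forall C', is_chain P C' -> C `<=` C' -> C' = C.

Definition maximal_antichain (T : Type) (P A : set (set T)) : Prop :=
  is_antichain P A /\ forall A', is_antichain P A' -> A `<=` A' -> A' = A.

(* Main.v *)
Require Import Defs.
From HB Require Import structures.
From mathcomp Require Import all_boot all_order all_algebra.
From mathcomp Require Import all_classical all_reals all_analysis.
From mathcomp Require Import wochoice.
Local Open Scope classical_set_scope.
Local Open Scope card_scope.

Set Implicit Arguments. Unset Strict Implicit.

Definition cyl (x : C2) (n : nat) : set C2 :=
  [set y | forall i, (i < n)%N -> y i = x i].

Lemma nbhs_cyl (x : C2) n : nbhs x (cyl x n).
Proof.
elim: n => [|n IH].
  have -> : cyl x 0 = setT by apply/seteqP; split => // y _ i.
  exact: filterT.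
have H1 : nbhs x [set y : C2 | y n = x n].
  have := @proj_continuous nat (fun _ => bool) n x.
  move=> /(_ [set x n]); apply.
  by move=> b /= ->.
apply: filterS (filterI IH H1) => y [Hy Hn] i; rewrite ltnS leq_eqVlt.
by case/orP => [/eqP -> //|]; exact: Hy.
Qed.

Lemma cyl_basis (x : C2) (U : set C2) : nbhs x U -> exists n, cyl x n `<=` U.
Proof.
move=> Ux; apply: contrapT => /forallNP H.
have : forall n, exists y, cyl x n y /\ ~ U y.
  move=> n; have /existsNP [y Hy] := H n.
  by exists y; apply/not_implyP.
move=> /choice [y Hy].
have cv : y @ \oo --> x.
  apply/cvg_sup => N V [V'] [[W] oW <-] WfN WV.
  apply: (filterS WV); rewrite nbhs_simpl; exists N.+1 => // i /= Hi.
  by rewrite (proj1 (Hy i) N Hi).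
have := cv U Ux; rewrite nbhs_simpl => -[N _ HN].
exact: (proj2 (Hy N)) (HN N (leqnn N)).
Qed.

Set Implicit Arguments. Unset Strict Implicit.

Definition upd (x : C2) (j : nat) (b : bool) : C2 :=
  fun i => if i == j then b else x i.

Lemma nd_crit (F : set C2) :
  (forall n, exists j b, (n <= j)%N /\ forall w, F w -> w j = b) ->
  nowhere_dense_set F.
Proof.
move=> H; rewrite /nowhere_dense_set; apply/seteqP; split => // x /= Hx.
have [n Hn] := cyl_basis Hx.
have [j [b [Hnj Hb]]] := H n.
pose y := upd x j (~~ b).
have Hy : cyl x n y.
  move=> i Hi; rewrite /y /upd; case: eqP => // E.
  by move: Hi; rewrite E ltnNge Hnj.
have := Hn y Hy (cyl y j.+1) (nbhs_cyl y j.+1).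
case=> w [Fw Cw]; have := Hb w Fw; rewrite (Cw j (ltnSn j)) /y /upd eqxx.
by case: (b).
Qed.

Lemma nd_avoid (F : set C2) : nowhere_dense_set F ->
  forall x n, exists ym : C2 * nat, cyl x n ym.1 /\ (n < ym.2)%N /\
    forall w, cyl ym.1 ym.2 w -> ~ F w.
Proof.
move=> HF x n.
have : ~ (cyl x n `<=` closure F).
  move=> sub; have : interior (closure F) x.
    exact: filterS sub (nbhs_cyl x n).
  by rewrite HF.
move=> /existsNP [y /not_implyP [Cy Ny]].
have /existsNP [B /not_implyP [nB HB]] : ~ (forall B, nbhs y B -> F `&` B !=set0).
  exact: Ny.
have [m Hm] := cyl_basis nB.
exists (y, (m + n).+1); split => //=; split; first by rewrite ltnS leq_addl.
move=> w Cw Fw; apply: HB; exists w; split => //; apply: Hm => i Hi.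
by apply: Cw; rewrite ltnS (leq_trans (ltnW Hi)) // leq_addr.
Qed.

Unset Implicit Arguments.

Fixpoint sq (av : nat -> C2 * nat -> C2 * nat) (z : C2) (k : nat) : C2 * nat :=
  match k with
  | 0 => ((fun _ => false) : C2, 0)
  | k'.+1 => av k' (upd (sq av z k').1 (sq av z k').2 (z k'), (sq av z k').2.+1)
  end.

Definition avP (F : nat -> set C2) (av : nat -> C2 * nat -> C2 * nat) :=
  forall k xn, cyl xn.1 xn.2 (av k xn).1 /\ (xn.2 < (av k xn).2)%N /\
    forall w, cyl (av k xn).1 (av k xn).2 w -> ~ F k w.

Section Constr.
Context (F : nat -> set C2) (av : nat -> C2 * nat -> C2 * nat) (Hav : avP F av).

Lemma sq_step z k : cyl (sq av z k).1 (sq av z k).2 (sq av z k.+1).1 /\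
  (sq av z k.+1).1 (sq av z k).2 = z k /\ ((sq av z k).2 < (sq av z k.+1).2)%N.
Proof.
have [H1 [H2 _]] := Hav k (upd (sq av z k).1 (sq av z k).2 (z k), (sq av z k).2.+1).
rewrite /=; split; last split.
- move=> i Hi; rewrite (H1 i (ltnW Hi)) /upd /=.
  by case: eqP => // E; move: Hi; rewrite E ltnn.
- by rewrite (H1 _ (ltnSn _)) /upd /= eqxx.
- exact: ltn_trans (ltnSn _) H2.
Qed.

Lemma sq_ge z k : (k <= (sq av z k).2)%N.
Proof.
elim: k => // k IH; have [_ [_ H]] := sq_step z k.
exact: leq_ltn_trans IH H.
Qed.

Lemma sq_mono z k d : cyl (sq av z k).1 (sq av z k).2 (sq av z (k + d)).1 /\
  ((sq av z k).2 <= (sq av z (k + d)).2)%N.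
Proof.
elim: d => [|d [IH1 IH2]]; first by rewrite addn0.
have [S1 [_ S3]] := sq_step z (k + d); rewrite addnS; split.
  move=> i Hi; rewrite (S1 i (leq_trans Hi IH2)); exact: IH1.
exact: leq_trans IH2 (ltnW S3).
Qed.

Definition gmap (z : C2) : C2 := fun i => (sq av z i.+1).1 i.

Lemma gmap_cyl z k : cyl (sq av z k).1 (sq av z k).2 (gmap z).
Proof.
move=> i Hi; rewrite /gmap.
have [le|lt] := leqP i.+1 k.
  have [H _] := sq_mono z i.+1 (k - i.+1).
  rewrite subnKC // in H; rewrite H //.
  exact: leq_trans (ltnSn i) (sq_ge z i.+1).
have [H _] := sq_mono z k (i.+1 - k).
by rewrite subnKC ?(ltnW lt) // in H; rewrite H.
Qed.

Lemma gmap_avoid z k : ~ F k (gmap z).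
Proof.
have [_ [_ H]] := Hav k (upd (sq av z k).1 (sq av z k).2 (z k), (sq av z k).2.+1).
exact: (H (gmap z) (gmap_cyl z k.+1)).
Qed.

Lemma sq_agree z z' k : (forall i, (i < k)%N -> z i = z' i) -> sq av z k = sq av z' k.
Proof.
elim: k => // k IH H /=.
rewrite IH; last by move=> i Hi; apply: H; exact: ltnW.
by rewrite H.
Qed.

Lemma gmap_inj : injective gmap.
Proof.
move=> z z' E; apply: functional_extensionality_dep => i; apply: contrapT => Ne.
have ex : exists k, z k != z' k by exists i; apply/eqP.
case: (ex_minnP ex) => k Hk Hmin.
have Ha : sq av z k = sq av z' k.
  apply: sq_agree => j Hj; apply/eqP; apply: contraTT Hj => /Hmin.
  by rewrite leqNgt.
have [_ [S2 S3]] := sq_step z k; have [_ [S2' S3']] := sq_step z' k.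
have G1 := gmap_cyl z k.+1 _ S3; have G2 := gmap_cyl z' k.+1 _ S3'.
rewrite S2 in G1; rewrite S2' -Ha -E G1 in G2.
by move: Hk; rewrite G2 eqxx.
Qed.

End Constr.

Lemma meager_avoid (M : set C2) : meager_set M ->
  exists g : C2 -> C2, injective g /\ forall z, ~ M (g z).
Proof.
move=> [F [HF HM]].
have : forall kx : nat * (C2 * nat), exists ym : C2 * nat,
   cyl kx.2.1 kx.2.2 ym.1 /\ (kx.2.2 < ym.2)%N /\
    forall w, cyl ym.1 ym.2 w -> ~ F kx.1 w.
  by move=> [k [x n]]; exact: nd_avoid (HF k) x n.
move=> /choice [f Hf].
pose av k xn := f (k, xn).
have Hav : avP F av by move=> k xn; exact: Hf (k, xn).
exists (gmap av); split; first exact: (gmap_inj F av Hav).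
move=> z /HM [k _ Fk]; exact: (gmap_avoid F av Hav z k Fk).
Qed.

Unset Implicit Arguments.

Lemma meager_sub (A B : set C2) : A `<=` B -> meager_set B -> meager_set A.
Proof. by move=> AB [F [HF HB]]; exists F; split => // x /AB /HB. Qed.

Lemma meager_U (A B : set C2) : meager_set A -> meager_set B -> meager_set (A `|` B).
Proof.
move=> [F [HF HA]] [G [HG HB]].
exists (fun k => if odd k then G k./2 else F k./2); split.
  by move=> k; case: (odd k).
move=> x [/HA [n _ Fn]|/HB [n _ Gn]].
  by exists n.*2 => //=; rewrite odd_double doubleK.
by exists n.*2.+1 => //=; rewrite odd_double /= uphalf_double.
Qed.

Lemma meager1 (p : C2) : meager_set [set p].
Proof.
exists (fun _ => [set p]); split; last by move=> x ->; exists 0.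
move=> _; apply: nd_crit => n; exists n, (p n); split => // w -> //.
Qed.

Lemma meager_out (M : set C2) : meager_set M -> exists p, ~ M p.
Proof. by move=> /meager_avoid [g [_ Hg]]; exists (g point). Qed.

Lemma card_le_of (T U : Type) (A : set T) (B : set U) (f : T -> U) :
  (forall x, A x -> B (f x)) ->
  (forall x y, A x -> A y -> f x = f y -> x = y) -> A #<= B.
Proof.
move=> fAB finj.
have : $|{injfun A >-> B}| by apply/injfunPex; exists f => // x y; rewrite !in_setE; exact: finj.
by case=> g; apply/card_leP; squash (sigLR g).
Qed.

Unset Implicit Arguments.

Lemma ne_of (Z : set C2) x : Z x -> Z <> set0.
Proof. by move=> Zx E; rewrite E in Zx. Qed.

Lemma P_of (Z : set C2) x : meager_set Z -> Z x -> meager_ideal_nonempty Z.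
Proof. by move=> MZ Zx; split; [exact: MZ | exact: ne_of Zx]. Qed.

Lemma anti_witness (A : set (set C2)) (Z : set C2) :
  maximal_antichain meager_ideal_nonempty A -> meager_ideal_nonempty Z ->
  exists W, A W /\ (Z `<=` W \/ W `<=` Z).
Proof.
move=> [[AP Aanti] Amax] PZ; apply: contrapT => H.
have H' : forall W, A W -> ~ (Z `<=` W) /\ ~ (W `<=` Z).
  by move=> W AW; split => S; apply: H; exists W; split => //; [left|right].
have : is_antichain meager_ideal_nonempty (A `|` [set Z]).
  split.
    by move=> X [/AP //|-> //].
  move=> X Y [AX|->] [AY|->] XY.
  - exact: Aanti.
  - by have [h1 h2] := H' X AX; split.
  - by have [h1 h2] := H' Y AY; split.
  - by [].
move=> /Amax E; have {E} E := E (@subsetUl _ A [set Z]).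
have : (A `|` [set Z]) Z by right.
rewrite E => AZ; apply: H; exists Z; split => //; by left.
Qed.

Definition Qt (t : C2) : set C2 := [set x | forall n, x n.*2 = t n].
Definition qinj (t z : C2) : C2 := fun i => if odd i then z i./2 else t i./2.

Lemma qinjQ t z : Qt t (qinj t z).
Proof. by move=> n; rewrite /qinj odd_double doubleK. Qed.

Lemma qinj_inj t : injective (qinj t).
Proof.
move=> z z' E; apply: functional_extensionality_dep => i.
have := congr1 (fun f : C2 => f i.*2.+1) E.
by rewrite /qinj /= odd_double /= uphalf_double.
Qed.

Lemma meagerQ t : meager_set (Qt t).
Proof.
exists (fun _ => Qt t); split; last by move=> x Hx; exists 0.
move=> _; apply: nd_crit => n; exists n.*2, (t n); split; last by move=> w ->.
by rewrite -addnn leq_addr.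
Qed.

Lemma part2a (A : set (set C2)) :
  maximal_antichain meager_ideal_nonempty A -> [set: C2] #<= A.
Proof.
move=> Amax; have [[AP Aanti] _] := Amax.
have [[t [W [AW HW]]]|Hno] := pselect (exists t W, A W /\ Qt t `<=` W).
- have MW : meager_set W by have [] := AP W AW.
  have [g [ginj gW]] := meager_avoid W MW.
  pose h := qinj t.
  have hW z : W (h z) by apply: HW; exact: qinjQ.
  pose Zz z := (W `\ h z) `|` [set g z].
  have PZ z : meager_ideal_nonempty (Zz z).
    apply: (P_of _ (g z)); last by right.
    apply: (meager_sub _ (W `|` [set g z])); last exact: meager_U _ _ MW (meager1 _).
    by move=> x [[Wx _]|->]; [left|right].
  have /choice [f Hf] : forall z, exists V, A V /\ (Zz z `<=` V \/ V `<=` Zz z).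
    by move=> z; exact: anti_witness _ _ Amax (PZ z).
  have Hg z : f z (g z).
    have [Af [S|S]] := Hf z; first by apply: S; right.
    apply: contrapT => ng.
    have S' : f z `<=` W.
      by move=> x fx; case: (S x fx) => [[]//|E]; rewrite -E in ng.
    have ne : f z <> W.
      move=> E; have := hW z; rewrite -E => /S [[_ /= ]|]; first by [].
      by move=> E'; apply: (gW z); rewrite -E'; exact: hW.
    by have [h1 _] := Aanti _ _ Af AW ne.
  have Hh z : Zz z `<=` f z -> ~ f z (h z).
    move=> S fh; have [Af _] := Hf z.
    have ne : f z <> W by move=> E; apply: (gW z); rewrite -E; exact: Hg.
    have [_ h2] := Aanti _ _ Af AW ne; apply: h2 => w Ww.
    have [->//|nw] := pselect (w = h z).
    by apply: S; left; split.
  apply: (card_le_of _ _ _ _ f) => [z _|z z' _ _ E]; first by have [] := Hf z.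
  have T1 : forall u v, f u = f v -> f u `<=` Zz u -> u = v.
    move=> u v E' S; apply: ginj; have := Hg v; rewrite -E' => /S [[Wg _]|//].
    by have := gW v Wg.
  have [_ [S|S]] := Hf z; last exact: T1 z z' E S.
  have [_ [S'|S']] := Hf z'; last by symmetry; exact: T1 z' z (esym E) S'.
  apply: (qinj_inj t); apply: contrapT => ne.
  apply: (Hh z S); rewrite E; apply: S'; left; split; first exact: hW.
  by move=> /= E'; exact: ne E'.
- have PQ u : meager_ideal_nonempty (Qt u).
    exact: (P_of _ (qinj u point)) (meagerQ u) (qinjQ u point).
  have /choice [f Hf] : forall u, exists V, A V /\ V `<=` Qt u.
    move=> u; have [V [AV [S|S]]] := anti_witness A (Qt u) Amax (PQ u).
      by exfalso; apply: Hno; exists u, V.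
    by exists V.
  apply: (card_le_of _ _ _ _ f) => [u _|u v _ _ E]; first by have [] := Hf u.
  have [Au Su] := Hf u; have [Av Sv] := Hf v.
  have [_ ne] := AP _ Au.
  have [x fx] : exists x, f u x.
    by apply: contrapT => /forallNP H; apply: ne; apply/seteqP; split => // y /H.
  apply: functional_extensionality_dep => n.
  by rewrite -(Su x fx n) (Sv x _ n) // -E.
Qed.

Lemma part2b : exists A : set (set C2), maximal_antichain meager_ideal_nonempty A /\
      A #<= [set: C2].
Proof.
exists [set X | exists x, X = [set x]]; split; last first.
  apply: (card_le_of _ _ _ _ (fun X => xget point X)) => // X Y [x ->] [y ->].
  have gx := @xgetPex _ point [set x] (ex_intro _ x erefl).
  have gy := @xgetPex _ point [set y] (ex_intro _ y erefl).
  by move=> E; rewrite -gx -gy E.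
split.
  split; first by move=> X [x ->]; exact: P_of (meager1 x) erefl.
  move=> X Y [x ->] [y ->] ne; split => S; apply: ne.
    by rewrite (S x erefl).
  by rewrite (S y erefl).
move=> A' [A'P A'anti] sub; apply/seteqP; split => // Z A'Z.
have [_ ne] := A'P Z A'Z.
have [z Zz] : exists z, Z z.
  by apply: contrapT => /forallNP H; apply: ne; apply/seteqP; split => // y /H.
exists z; apply: contrapT => nZ.
have A'z : A' [set z] by apply: sub; exists z.
have [_ h2] := A'anti _ _ A'Z A'z nZ; apply: h2 => y ->; exact: Zz.
Qed.

Unset Implicit Arguments.

Lemma chain_add (C : set (set C2)) (Z : set C2) :
  maximal_chain meager_ideal C -> meager_ideal Z ->
  (forall X, C X -> X `<=` Z \/ Z `<=` X) -> C Z.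
Proof.
move=> [[CP Cch] Cmax] PZ H.
have : is_chain meager_ideal (C `|` [set Z]).
  split; first by move=> X [/CP //|-> //].
  move=> X Y [CX|->] [CY|->].
  - exact: Cch.
  - exact: H.
  - by case: (H Y CY); [right|left].
  - by left.
move=> /Cmax E; have {E} E := E (@subsetUl _ C [set Z]).
have : (C `|` [set Z]) Z by right.
by rewrite E.
Qed.

Lemma part1a (C : set (set C2)) : maximal_chain meager_ideal C ->
  exists N : set C2, ~ meager_set N /\ N #<= C.
Proof.
move=> Cmax; have [[CP Cch] _] := Cmax.
pose W := [set x | exists2 X, C X & X x].
pose Xof x := [set w | forall Y, C Y -> Y x -> Y w].
have below x Y : C Y -> ~ Y x -> Y `<=` Xof x.
  move=> CY nY w Yw Y' CY' Y'x; case: (Cch _ _ CY CY') => S.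
    exact: S.
  by exfalso; apply: nY; apply: S.
have CX x : W x -> C (Xof x).
  move=> [Y0 CY0 Y0x]; apply: chain_add => //.
    by apply: (meager_sub _ Y0); [move=> w Hw; exact: Hw | exact: CP].
  move=> Y CY; have [Yx|nYx] := pselect (Y x).
    by right => w; apply.
  by left; exact: below.
exists W; split.
  move=> MW.
  have CW : C W by apply: chain_add => // X CX'; left => w Xw; exists X.
  have [p np] := meager_out W MW.
  have : C (W `|` [set p]).
    apply: chain_add => //; first exact: meager_U _ _ MW (meager1 p).
    by move=> X CX'; left => w Xw; left; exists X.
  move=> CWp; apply: np; exists (W `|` [set p]) => //; by right.
apply: (card_le_of _ _ _ _ Xof) => [x Wx|x x' Wx Wx' E]; first exact: CX.
apply: contrapT => ne.
pose X' := Xof x `\ x.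
have CX' : C X'.
  apply: chain_add => //.
    by apply: (meager_sub _ (Xof x)); [move=> w []|exact: CP (CX x Wx)].
  move=> Y CY; have [Yx|nYx] := pselect (Y x).
    by right => w [Xw _]; exact: Xw.
  left => w Yw; split; first exact: below nYx w Yw.
  by move=> /= wx; apply: nYx; rewrite -wx.
have X'x' : X' x'.
  split; first by rewrite E => Y _.
  by move=> /= e; apply: ne; rewrite e.
have : Xof x' x by rewrite -E => Y _.
by move=> /(_ X' CX' X'x') [_ /=]; apply.
Qed.

Unset Implicit Arguments.

Lemma wo_exists : exists R : C2 -> C2 -> Prop,
  forall P : set C2, (exists x, P x) ->
    exists m, P m /\ (forall y, P y -> R m y) /\
      (forall m', P m' -> (forall y, P y -> R m' y) -> m' = m).
Proof.
have [R HR] := well_ordering_principle C2.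
exists (fun x y => R x y) => P [x Px].
have ne : nonempty [pred x | `[< P x >]].
  by exists x; rewrite inE.
have [m [[Hm1 Hm2] Hu]] := HR _ ne.
exists m; split; first by move: Hm1; rewrite inE.
split.
  move=> y Py; apply: Hm2; by rewrite inE.
move=> m' Pm' Hm'; symmetry; apply: Hu; split.
  by rewrite inE.
by move=> y; rewrite inE => /Hm'.
Qed.

Section WO.
Variable R : C2 -> C2 -> Prop.
Hypothesis HR : forall P : set C2, (exists x, P x) ->
    exists m, P m /\ (forall y, P y -> R m y) /\
      (forall m', P m' -> (forall y, P y -> R m' y) -> m' = m).

Lemma R_refl x : R x x.
Proof.
have [m [Pm [Hm _]]] := HR [set x] (ex_intro _ x erefl).
by rewrite -Pm; exact: Hm.
Qed.

Lemma R_anti x y : R x y -> R y x -> x = y.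
Proof.
move=> xy yx.
have [m [Pm [Hm Hu]]] := HR [set w | w = x \/ w = y] (ex_intro _ x (or_introl erefl)).
have -> : x = m by apply: Hu; [left|move=> w [->|->] //; exact: R_refl].
by symmetry; apply: Hu; [right|move=> w [->|->] //; exact: R_refl].
Qed.

Lemma R_total x y : R x y \/ R y x.
Proof.
have [m [Pm [Hm Hu]]] := HR [set w | w = x \/ w = y] (ex_intro _ x (or_introl erefl)).
case: Pm => E; rewrite -E.
  by left; apply: Hm; right.
by right; apply: Hm; left.
Qed.

Lemma R_trans x y z : R x y -> R y z -> R x z.
Proof.
move=> xy yz.
have [m [Pm [Hm Hu]]] := HR [set w | w = x \/ w = y \/ w = z]
   (ex_intro _ x (or_introl erefl)).
case: Pm => [E|[E|E]]; subst m.
- by apply: Hm; right; right.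
- have E := R_anti _ _ xy (Hm x (or_introl erefl)); subst y; exact: yz.
- have E := R_anti _ _ yz (Hm y (or_intror (or_introl erefl))); subst y; exact: xy.
Qed.


Lemma part1b_R (N : set C2) : ~ meager_set N ->
  exists C : set (set C2), maximal_chain meager_ideal C /\ C #<= N.
Proof.
move=> nN.
pose S x := [set y | N y /\ R y x].
pose C := [set D : set C2 | meager_set D /\ D `<=` N /\
   (forall a b, N a -> D b -> R a b -> D a)].
have Cch : forall D1 D2, C D1 -> C D2 -> D1 `<=` D2 \/ D2 `<=` D1.
  move=> D1 D2 [_ [N1 d1]] [_ [N2 d2]].
  have [S12|nS] := pselect (D1 `<=` D2); first by left.
  right; have /existsNP [a /not_implyP [D1a nD2a]] := nS.
  move=> b D2b; have [ab|ba] := R_total a b.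
    by exfalso; apply: nD2a; exact: d2 _ _ (N1 a D1a) D2b ab.
  exact: d1 _ _ (N2 b D2b) D1a ba.
have SC x : meager_set (S x) -> C (S x).
  move=> MS; split => //; split; first by move=> y [].
  move=> a b Na [Nb Rb] Rab; split => //; exact: R_trans _ _ _ Rab Rb.
pose U := [set x | N x /\ meager_set (S x)].
have nU : ~ meager_set U.
  move=> MU; have [NU|nNU] := pselect (N `<=` U).
    by apply: nN; exact: meager_sub _ _ NU MU.
  have /existsNP [x0 /not_implyP [Nx0 nUx0]] := nNU.
  have [m [[Nm nUm] [Hm _]]] := HR [set x | N x /\ ~ U x] (ex_intro _ x0 (conj Nx0 nUx0)).
  apply: nUm; split => //.
  apply: (meager_sub _ (U `|` [set m])); last exact: meager_U _ _ MU (meager1 m).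
  move=> y [Ny Rym]; have [->|ne] := pselect (y = m); first by right.
  left; apply: contrapT => nUy.
  by apply: ne; apply: R_anti _ _ Rym (Hm y (conj Ny nUy)).
exists C; split.
  split; first by split; [move=> D [] | exact: Cch].
  move=> C' [C'P C'ch] sub; apply/seteqP; split => // Z C'Z.
  have MZ : meager_set Z := C'P Z C'Z.
  have cmp D : C D -> D `<=` Z \/ Z `<=` D.
    by move=> CD; apply: C'ch => //; exact: sub.
  have [D0 [CD0 nD0]] : exists D0, C D0 /\ ~ D0 `<=` Z.
    apply: contrapT => /forallNP H; apply: nU; apply: (meager_sub _ Z) => // x [Nx MSx].
    have CS := SC x MSx.
    have : S x `<=` Z by apply: contrapT => nS; apply: (H (S x)); split.
    by apply; split => //; exact: R_refl.
  have ZD0 : Z `<=` D0 by case: (cmp D0 CD0).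
  have [MD0 [ND0 dD0]] := CD0.
  split => //; split; first by move=> z /ZD0 /ND0.
  move=> a z Na Zz Raz.
  have CSa : C (S a).
    apply: SC; apply: (meager_sub _ D0) => // b [Nb Rba].
    exact: dD0 _ _ Nb (ZD0 z Zz) (R_trans _ _ _ Rba Raz).
  case: (cmp _ CSa) => [sub'|sub'].
    by apply: sub'; split => //; exact: R_refl.
  have [_ Rza] := sub' z Zz.
  by rewrite (R_anti _ _ Raz Rza).
pose Pm (D : set C2) := [set x | N x /\ ~ D x /\ forall y, N y -> ~ D y -> R x y].
pose f D := xget point (Pm D).
have Hf D : C D -> Pm D (f D).
  move=> [MD [ND dD]]; apply: xgetPex.
  have [x0 [Nx0 nDx0]] : exists x, N x /\ ~ D x.
    apply: contrapT => /forallNP H; apply: nN; apply: (meager_sub _ D) => // x Nx.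
    by apply: contrapT => nD; apply: (H x).
  have [m [[Nm nDm] [Hm _]]] := HR [set x | N x /\ ~ D x] (ex_intro _ x0 (conj Nx0 nDx0)).
  by exists m; split => //; split => // y Ny nDy; exact: Hm.
have key D1 D2 : C D1 -> C D2 -> f D1 = f D2 -> D1 `<=` D2 -> D2 `<=` D1.
  move=> C1 C2' E _ a D2a; apply: contrapT => nD1a.
  have [_ [N2 d2]] := C2'.
  have [Nm [_ Hm]] := Hf D1 C1; have [_ [nD2m _]] := Hf D2 C2'.
  apply: nD2m; rewrite -E; exact: (d2 (f D1) a Nm D2a (Hm a (N2 a D2a) nD1a)).
apply: (card_le_of _ _ _ _ f) => [D CD|D1 D2 C1 C2' E]; first by have [] := Hf D CD.
apply/seteqP; case: (Cch D1 D2 C1 C2') => S12.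
  by split => //; exact: key C1 C2' E S12.
by split => //; exact: key C2' C1 (esym E) S12.
Qed.

End WO.

Lemma part1b (N : set C2) : ~ meager_set N ->
  exists C : set (set C2), maximal_chain meager_ideal C /\ C #<= N.
Proof.
have [R HR] := wo_exists; exact: part1b_R R HR N.
Qed.


Theorem mainTheorem16 :
  (* mc(meager, ⊆) = non(meager) *)
  ((forall C : set (set C2), maximal_chain meager_ideal C ->
      exists N : set C2, ~ meager_set N /\ N #<= C) /\
   (forall N : set C2, ~ meager_set N ->
      exists C : set (set C2), maximal_chain meager_ideal C /\ C #<= N)) /\
  (* mac(meager \ {∅}, ⊆) = c = |2^omega| *)
  ((forall A : set (set C2), maximal_antichain meager_ideal_nonempty A ->
      [set: C2] #<= A) /\
   (exists A : set (set C2), maximal_antichain meager_ideal_nonempty A /\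
      A #<= [set: C2])).
Proof.
split; split.
- exact: part1a.
- exact: part1b.
- exact: part2a.
- exact: part2b.
Qed.
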